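(* Let $\lambda>0$, $\gamma>0$, and let $\beta_1=\beta_1(\gamma)$ be the unique positive solution of $\frac{\sqrt\pi}{2}\gamma x(1+x)^{1/2}(3+x)=1$. For $b\in[0,\beta_1)$ let $\varphi_b$ denote the unique solution, within the set $K$ of bounded analytic functions $h:[0,\lambda]\to\mathbb{R}$ with $0\le h\le 1$, of \begin{align*} &[(1+b\, y(\eta))y'(\eta)]'+2\eta y'(\eta)=0, \quad 0<\eta<\lambda,\\ &y'(0)+b\, y(0)y'(0)-\gamma y(0)=0,\\ &y(\lambda)=1. \end{align*} Let $0<b<\beta_1$. Then there exists $L>0$ such that for all $b_1,b_2\in[0,b]$, $$\|\varphi_{b_1}-\varphi_{b_2}\|_\infty\le L|b_1-b_2|,$$ where $\|\cdot\|_\infty$ is the supremum norm on $[0,\lambda]$.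
   Context: Existence and uniqueness of $\varphi_b$ in $K$ for every $b\in[0,\beta_1)$ is known (it is the unique fixed point of a contraction on $K$). *)

(* Defs.v *)
From Stdlib Require Import Reals Lra.
From Coquelicot Require Import Coquelicot.
Open Scope R_scope.

Definition analytic_on_0l (lam : R) (h : R -> R) : Prop :=
  forall x, 0 <= x <= lam ->
    exists r : R, 0 < r /\ exists a : nat -> R,
      forall y, 0 <= y <= lam -> Rabs (y - x) < r ->
        is_series (fun n => a n * (y - x) ^ n) (h y).

Definition inK (lam : R) (h : R -> R) : Prop :=
  analytic_on_0l lam h /\
  (exists M, forall x, 0 <= x <= lam -> Rabs (h x) <= M) /\
  (forall x, 0 <= x <= lam -> 0 <= h x <= 1).

Definition right_deriv_at (y : R -> R) (x d : R) : Prop :=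
  filterlim (fun t => (y t - y x) / (t - x)) (at_right x) (locally d).

Definition solves_bvp (lam gamma b : R) (y : R -> R) : Prop :=
  (exists dy : R -> R,
     (forall eta, 0 < eta < lam -> is_derive y eta (dy eta)) /\
     (forall eta, 0 < eta < lam ->
        ex_derive (fun t => (1 + b * y t) * dy t) eta /\
        Derive (fun t => (1 + b * y t) * dy t) eta + 2 * eta * dy eta = 0)) /\
  (exists d0, right_deriv_at y 0 d0 /\ d0 + b * y 0 * d0 - gamma * y 0 = 0) /\
  y lam = 1.

(* Main.v *)
Require Import Defs.
From Stdlib Require Import Reals Lra Lia Classical.
From Coquelicot Require Import Coquelicot.
Open Scope R_scope.

Lemma ball_R (x e y : R) : ball x e y <-> Rabs (y - x) < e.
Proof. reflexivity. Qed.

Lemma cont_of_eps (f : R -> R) x :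
  (forall eps, 0 < eps -> exists d, 0 < d /\ forall t, Rabs (t - x) < d -> Rabs (f t - f x) < eps) ->
  continuous f x.
Proof.
  intros H. apply (proj2 (filterlim_locally f (f x))).
  intros eps. destruct (H eps (cond_pos eps)) as [d [Hd Hf]].
  exists (mkposreal d Hd). intros t Ht. apply Hf. exact Ht.
Qed.

Lemma eps_of_cont (f : R -> R) x : continuous f x ->
  forall eps, 0 < eps -> exists d, 0 < d /\ forall t, Rabs (t - x) < d -> Rabs (f t - f x) < eps.
Proof.
  intros H eps Heps.
  destruct (proj1 (filterlim_locally f (f x)) H (mkposreal eps Heps)) as [d Hd].
  exists d. split. apply cond_pos. intros t Ht. apply (Hd t). exact Ht.
Qed.

Definition clamp (p q x : R) := Rmax p (Rmin q x).
Definition ContOn (p q : R) (f : R -> R) :=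
  forall x, p <= x <= q -> continuous (fun t => f (clamp p q t)) x.

Lemma clamp_in p q x : p <= x <= q -> clamp p q x = x.
Proof. intros H. unfold clamp. rewrite Rmin_right by lra. rewrite Rmax_right; lra. Qed.

Lemma clamp_range p q x : p <= q -> p <= clamp p q x <= q.
Proof. intros H. unfold clamp. unfold Rmax, Rmin.
  repeat destruct Rle_dec; lra. Qed.

Lemma clamp_lip p q x y : p <= q -> Rabs (clamp p q x - clamp p q y) <= Rabs (x - y).
Proof. intros H. unfold clamp, Rmax, Rmin.
  repeat destruct Rle_dec; unfold Rabs; repeat destruct Rcase_abs; lra. Qed.

Lemma clamp_cont p q x : p <= q -> continuous (clamp p q) x.
Proof. intros H. apply cont_of_eps. intros eps He. exists eps. split; auto.
  intros t Ht. eapply Rle_lt_trans. apply clamp_lip; auto. auto. Qed.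

Lemma ContOn_loc p q f : p <= q ->
  (forall x, p <= x <= q -> exists g e, 0 < e /\ continuous g x /\
      forall s, p <= s <= q -> Rabs (s - x) < e -> f s = g s) -> ContOn p q f.
Proof.
  intros Hpq H x Hx. destruct (H x Hx) as [g [e [He [Hg Heq]]]].
  apply continuous_ext_loc with (fun t => g (clamp p q t)).
  - exists (mkposreal e He). intros t Ht. symmetry. apply Heq.
    apply clamp_range; auto.
    assert (HH: Rabs (clamp p q t - clamp p q x) <= Rabs (t - x)) by (apply clamp_lip; auto).
    rewrite (clamp_in p q x Hx) in HH. change (Rabs (t - x) < e) in Ht. lra.
  - apply continuous_comp. apply clamp_cont; auto. rewrite clamp_in; auto.
Qed.

Lemma ContOn_cont p q f : p <= q -> (forall x, p <= x <= q -> continuous f x) -> ContOn p q f.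
Proof. intros Hpq H. apply ContOn_loc; auto. intros x Hx. exists f, 1. repeat split; auto; lra. Qed.

Lemma ContOn_plus p q f g : ContOn p q f -> ContOn p q g -> ContOn p q (fun t => f t + g t).
Proof. intros Hf Hg x Hx. apply (continuous_plus (fun t => f (clamp p q t)) (fun t => g (clamp p q t))); auto. Qed.

Lemma ContOn_mult p q f g : ContOn p q f -> ContOn p q g -> ContOn p q (fun t => f t * g t).
Proof. intros Hf Hg x Hx. apply (continuous_mult (fun t => f (clamp p q t)) (fun t => g (clamp p q t))); auto. Qed.

Lemma ContOn_const p q c : ContOn p q (fun _ => c).
Proof. intros x Hx. apply continuous_const. Qed.

Lemma ContOn_id p q : p <= q -> ContOn p q (fun t => t).
Proof. intros H x Hx. apply clamp_cont; auto. Qed.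

Lemma ContOn_opp p q f : ContOn p q f -> ContOn p q (fun t => - f t).
Proof. intros Hf x Hx. apply (continuous_opp (fun t => f (clamp p q t))); auto. Qed.

Lemma ContOn_minus p q f g : ContOn p q f -> ContOn p q g -> ContOn p q (fun t => f t - g t).
Proof. intros Hf Hg. apply (ContOn_plus p q f (fun t => - g t)); auto. apply ContOn_opp; auto. Qed.

Lemma ContOn_comp p q f h : ContOn p q f -> (forall z, continuous h z) -> ContOn p q (fun t => h (f t)).
Proof. intros Hf Hh x Hx. apply (continuous_comp (fun t => f (clamp p q t)) h); auto. Qed.

Lemma ContOn_inv p q f : ContOn p q f -> (forall x, p <= x <= q -> f x <> 0) -> ContOn p q (fun t => / f t).
Proof. intros Hf Hn x Hx. apply (continuous_Rinv_comp (fun t => f (clamp p q t))); auto.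
  rewrite clamp_in; auto. Qed.

Lemma ContOn_sub p q s t f : p <= s -> s <= t -> t <= q -> ContOn p q f -> ContOn s t f.
Proof.
  intros H1 H2 H3 Hf x Hx.
  apply continuous_ext with (fun z => f (clamp p q (clamp s t z))).
  - intros z. rewrite (clamp_in p q). auto. pose proof (clamp_range s t z H2). lra.
  - apply (continuous_comp (clamp s t) (fun z => f (clamp p q z))). apply clamp_cont; auto.
    rewrite clamp_in; auto. apply Hf. lra.
Qed.

Lemma ContOn_eps p q f x : ContOn p q f -> p <= x <= q -> forall eps, 0 < eps ->
  exists d, 0 < d /\ forall s, p <= s <= q -> Rabs (s - x) < d -> Rabs (f s - f x) < eps.
Proof.
  intros Hf Hx eps He. destruct (eps_of_cont _ _ (Hf x Hx) eps He) as [d [Hd H]].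
  exists d. split; auto. intros s Hs Hsx. specialize (H s Hsx).
  rewrite !clamp_in in H; auto.
Qed.

Lemma mono_up p q f df : p <= q -> ContOn p q f ->
  (forall x, p < x < q -> is_derive f x (df x)) ->
  (forall x, p < x < q -> 0 <= df x) -> f p <= f q.
Proof.
  intros Hpq Hc Hd Hpos. destruct (Req_dec p q) as [E|Hne]. subst; lra.
  set (dg := fun x => if Rlt_dec p x then if Rlt_dec x q then df x else 0 else 0).
  destruct (MVT_gen (fun t => f (clamp p q t)) p q dg) as [c [Hc1 Hc2]].
  - rewrite Rmin_left, Rmax_right by lra. intros x Hx.
    unfold dg. destruct Rlt_dec; [|lra]. destruct Rlt_dec; [|lra].
    apply is_derive_ext_loc with f; [|apply Hd; lra].
    assert (He : 0 < Rmin (x - p) (q - x)) by (apply Rmin_pos; lra).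
    exists (mkposreal _ He). intros t Ht. idtac.
    pose proof (Rmin_l (x-p) (q-x)). pose proof (Rmin_r (x-p) (q-x)).
    change (Rabs (t - x) < Rmin (x - p) (q - x)) in Ht. apply Rabs_def2 in Ht. rewrite clamp_in. reflexivity. lra.
  - rewrite Rmin_left, Rmax_right by lra. intros x Hx.
    apply continuity_pt_filterlim. apply Hc; auto.
  - rewrite !clamp_in in Hc2 by lra.
    assert (0 <= dg c). { unfold dg. destruct Rlt_dec; [|lra]. destruct Rlt_dec; [|lra]. apply Hpos; lra. }
    nra.
Qed.

Lemma mono_down p q f df : p <= q -> ContOn p q f ->
  (forall x, p < x < q -> is_derive f x (df x)) ->
  (forall x, p < x < q -> df x <= 0) -> f q <= f p.
Proof.
  intros Hpq Hc Hd Hneg.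
  assert (- f p <= - f q); [|lra].
  apply (mono_up p q (fun t => - f t) (fun t => - df t)); auto.
  apply ContOn_opp; auto.
  intros x Hx. apply (is_derive_opp f x (df x)). auto.
  intros x Hx. specialize (Hneg x Hx). lra.
Qed.

Lemma first_cross p q g : p <= q -> ContOn p q g -> g p < 0 -> 0 <= g q ->
  exists x0, p < x0 <= q /\ g x0 = 0 /\ forall x, p <= x <= x0 -> g x <= 0.
Proof.
  intros Hpq Hc Hp Hq.
  set (E := fun x => p <= x <= q /\ forall s, p <= s <= x -> g s < 0).
  assert (HB : bound E). { exists q. intros x [Hx _]. lra. }
  assert (HE : exists x, E x). { exists p. split. lra. intros s Hs. replace s with p by lra. auto. }
  destruct (completeness E HB HE) as [m [Hub Hlub]].
  assert (Hpm : p <= m). { apply Hub. split. lra. intros s Hs. replace s with p by lra. auto. }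
  assert (Hmq : m <= q). { apply Hlub. intros x [Hx _]. lra. }
  assert (C1 : forall s, p <= s < m -> g s < 0).
  { intros s Hs. destruct (Rle_lt_dec m s) as [?|Hlt]. lra.
    assert (~ is_upper_bound E s). { intros Hu. specialize (Hlub s Hu). lra. }
    apply not_all_ex_not in H. destruct H as [x Hx].
    apply Classical_Prop.imply_to_and in Hx. destruct Hx as [[Hx1 Hx2] Hx3].
    apply Hx2. lra. }
  assert (C2 : g m <= 0).
  { destruct (Rle_lt_dec (g m) 0) as [?|Hgt]; auto.
    destruct (Req_dec m p) as [Em|Hne]. subst. lra.
    destruct (ContOn_eps p q g m Hc (conj Hpm Hmq) (g m) Hgt) as [d [Hd Hd2]].
    set (s := Rmax p (m - d/2)).
    assert (Hs : p <= s < m). { unfold s, Rmax. destruct Rle_dec; lra. }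
    specialize (C1 s Hs). assert (Rabs (s - m) < d). { unfold s, Rmax. destruct Rle_dec; unfold Rabs; destruct Rcase_abs; lra. }
    specialize (Hd2 s ltac:(lra) H). apply Rabs_def2 in Hd2; lra. }
  assert (C3 : 0 <= g m).
  { destruct (Rle_lt_dec 0 (g m)) as [?|Hlt]; auto.
    assert (Hmq' : m < q). { destruct (Req_dec m q). subst. lra. lra. }
    destruct (ContOn_eps p q g m Hc (conj Hpm Hmq) (- g m) ltac:(lra)) as [d [Hd Hd2]].
    set (s' := Rmin q (m + d/2)).
    assert (Hs' : m < s' <= q). { unfold s', Rmin. destruct Rle_dec; lra. }
    assert (E s'). { split. lra. intros s Hs. destruct (Rlt_dec s m). apply C1; lra.
      assert (Rabs (s - m) < d). { unfold s', Rmin in Hs. destruct Rle_dec in Hs; unfold Rabs; destruct Rcase_abs; lra. }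
      specialize (Hd2 s ltac:(lra) H). apply Rabs_def2 in Hd2; lra. }
    specialize (Hub s' H). lra. }
  exists m. split. split; auto. destruct (Req_dec m p). subst. lra. lra.
  split. lra. intros x Hx. destruct (Rlt_dec x m). left. apply C1; lra. replace x with m by lra. lra.
Qed.

Lemma last_cross p q g : p <= q -> ContOn p q g -> g q < 0 -> 0 <= g p ->
  exists x0, p <= x0 < q /\ g x0 = 0 /\ forall x, x0 <= x <= q -> g x <= 0.
Proof.
  intros Hpq Hc Hq Hp.
  destruct (first_cross p q (fun t => g (p + q - t))) as [x0 [H1 [H2 H3]]]; auto.
  - intros x Hx.
    apply continuous_ext with (fun t => g (clamp p q (p + q - t))).
    + intros t. f_equal. unfold clamp, Rmax, Rmin. repeat destruct Rle_dec; lra.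
    + apply (continuous_comp (fun t => p + q - t) (fun z => g (clamp p q z))).
      apply (continuous_minus (fun _ => p + q) (fun t => t)). apply continuous_const. apply continuous_id.
      apply Hc. lra.
  - replace (p + q - p) with q by ring. auto.
  - replace (p + q - q) with p by ring. auto.
  - exists (p + q - x0). split. lra. split. auto. intros x Hx.
    specialize (H3 (p + q - x) ltac:(lra)). replace (p + q - (p + q - x)) with x in H3 by ring. auto.
Qed.

Lemma Dext (f : R -> R) (x l l' : R) : is_derive f x l -> l = l' -> is_derive f x l'.
Proof. intros H E. subst. auto. Qed.

Lemma Dplus (f g : R -> R) (x df dg : R) : is_derive f x df -> is_derive g x dg -> is_derive (fun t => f t + g t) x (df + dg).
Proof. intros. apply (is_derive_plus f g x df dg); auto. Qed.

Lemma Dminus (f g : R -> R) (x df dg : R) : is_derive f x df -> is_derive g x dg -> is_derive (fun t => f t - g t) x (df - dg).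
Proof. intros. apply (is_derive_minus f g x df dg); auto. Qed.

Lemma Dmult (f g : R -> R) (x df dg : R) : is_derive f x df -> is_derive g x dg -> is_derive (fun t => f t * g t) x (df * g x + f x * dg).
Proof. intros. apply (is_derive_mult f g x df dg); auto. intros; apply Rmult_comm. Qed.

Lemma Dconst (c x : R) : is_derive (fun _ : R => c) x 0.
Proof. apply is_derive_Reals. apply derivable_pt_lim_const. Qed.

Lemma Did (x : R) : is_derive (fun t : R => t) x 1.
Proof. apply is_derive_Reals. apply derivable_pt_lim_id. Qed.

Lemma Dinv (f : R -> R) (x df : R) : is_derive f x df -> f x <> 0 -> is_derive (fun t => / f t) x (- df / (f x)^2).
Proof. intros. apply is_derive_inv; auto. Qed.

Lemma Dexp (f : R -> R) (x df : R) : is_derive f x df -> is_derive (fun t => exp (f t)) x (df * exp (f x)).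
Proof. intros H. apply (is_derive_comp exp f x (exp (f x)) df). apply is_derive_exp. auto. Qed.

Lemma Dmult_const_l (k x : R) : is_derive (fun t => k * t) x (k * 1).
Proof. eapply Dext. apply Dmult. apply Dconst. apply Did. cbv beta. ring. Qed.

Record GS (lam gamma c : R) (y u : R -> R) : Prop := {
  gs_c : 0 <= c;
  gs_rng : forall x, 0 <= x <= lam -> 0 <= y x <= 1;
  gs_yc : ContOn 0 lam y;
  gs_uc : forall t, 0 <= t < lam -> ContOn 0 t u;
  gs_u0 : u 0 = gamma * y 0;
  gs_yd : forall x, 0 < x < lam -> is_derive y x (u x / (1 + c * y x));
  gs_ud : forall x, 0 < x < lam -> is_derive u x (- (2 * x) * (u x / (1 + c * y x)))
}.

Lemma GS_D lam gamma c y u x : GS lam gamma c y u -> 0 <= x <= lam -> 1 <= 1 + c * y x.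
Proof. intros G Hx. pose proof (gs_c _ _ _ _ _ G). pose proof (gs_rng _ _ _ _ _ G x Hx). nra. Qed.

Lemma GS_a_pos lam gamma c y u : 0 < lam -> GS lam gamma c y u -> 0 < y lam -> 0 < y 0.
Proof.
  intros Hl G Hend. destruct (gs_rng _ _ _ _ _ G 0 ltac:(lra)) as [H0 _].
  destruct H0 as [|E]; auto. exfalso.
  assert (Hu : forall t, 0 <= t < lam -> u t = 0).
  { intros t Ht.
    assert (u t * u t <= u 0 * u 0).
    { apply (mono_down 0 t (fun s => u s * u s)
        (fun x => (- (2 * x) * (u x / (1 + c * y x))) * u x + u x * (- (2 * x) * (u x / (1 + c * y x))))).
      lra. apply ContOn_mult; apply (gs_uc _ _ _ _ _ G); auto.
      intros x Hx. apply Dmult; apply (gs_ud _ _ _ _ _ G); lra.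
      intros x Hx. pose proof (GS_D _ _ _ _ _ x G ltac:(lra)).
      assert (0 <= u x * u x / (1 + c * y x)). { apply Rmult_le_pos. nra. left. apply Rinv_0_lt_compat. lra. }
      replace (- (2 * x) * (u x / (1 + c * y x)) * u x + u x * (- (2 * x) * (u x / (1 + c * y x))))
        with (- (4 * x) * (u x * u x / (1 + c * y x))) by (field; lra). nra. }
    rewrite (gs_u0 _ _ _ _ _ G), <- E in H. nra. }
  assert (y lam <= y 0).
  { apply (mono_down 0 lam y (fun x => u x / (1 + c * y x))). lra. apply (gs_yc _ _ _ _ _ G).
    intros x Hx. apply (gs_yd _ _ _ _ _ G); auto.
    intros x Hx. rewrite Hu by lra. unfold Rdiv. lra. }
  lra.
Qed.

Lemma GS_u_nz lam gamma c y u : 0 < lam -> GS lam gamma c y u -> 0 < gamma -> 0 < y 0 ->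
  forall t, 0 <= t < lam -> u t <> 0.
Proof.
  intros Hl G Hg Ha t Ht E.
  assert (u 0 * u 0 * exp (4 * lam * 0) <= u t * u t * exp (4 * lam * t)).
  { apply (mono_up 0 t (fun s => u s * u s * exp (4 * lam * s))
      (fun x => ((- (2 * x) * (u x / (1 + c * y x))) * u x + u x * (- (2 * x) * (u x / (1 + c * y x)))) * exp (4 * lam * x)
                + u x * u x * ((4 * lam * 1) * exp (4 * lam * x)))).
    lra. apply ContOn_mult. apply ContOn_mult; apply (gs_uc _ _ _ _ _ G); auto.
    apply (ContOn_comp 0 t (fun s => 4 * lam * s) exp). apply ContOn_mult. apply ContOn_const. apply ContOn_id. lra.
    intros z. apply continuity_pt_filterlim. apply derivable_continuous_pt. apply derivable_pt_exp.
    intros x Hx. eapply Dext. apply Dmult. apply Dmult; apply (gs_ud _ _ _ _ _ G); lra.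
    apply Dexp. apply Dmult. apply Dconst. apply Did. cbv beta. ring.
    intros x Hx. pose proof (GS_D _ _ _ _ _ x G ltac:(lra)).
    pose proof (exp_pos (4 * lam * x)).
    replace (((- (2 * x) * (u x / (1 + c * y x))) * u x + u x * (- (2 * x) * (u x / (1 + c * y x)))) * exp (4 * lam * x)
                + u x * u x * ((4 * lam * 1) * exp (4 * lam * x)))
      with (4 * (u x * u x * exp (4 * lam * x)) * ((lam * (1 + c * y x) - x) / (1 + c * y x))) by (field; lra).
    apply Rmult_le_pos. apply Rmult_le_pos. lra. apply Rmult_le_pos. nra. lra.
    apply Rmult_le_pos. nra. left. apply Rinv_0_lt_compat. lra. }
  rewrite E, (gs_u0 _ _ _ _ _ G) in H. pose proof (exp_pos (4 * lam * 0)).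
  assert (0 < gamma * y 0 * (gamma * y 0)) by (apply Rmult_lt_0_compat; apply Rmult_lt_0_compat; auto).
  nra.
Qed.

Lemma GS_u_pos lam gamma c y u : 0 < lam -> GS lam gamma c y u -> 0 < gamma -> 0 < y 0 ->
  forall t, 0 <= t < lam -> 0 < u t.
Proof.
  intros Hl G Hg Ha t Ht.
  destruct (Rlt_le_dec 0 (u t)) as [|Hle]; auto. exfalso.
  pose proof (GS_u_nz _ _ _ _ _ Hl G Hg Ha t Ht).
  destruct (first_cross 0 t (fun s => - u s)) as [x0 [H1 [H2 _]]]. lra.
  apply ContOn_opp. apply (gs_uc _ _ _ _ _ G); auto.
  rewrite (gs_u0 _ _ _ _ _ G). pose proof (Rmult_lt_0_compat _ _ Hg Ha). lra. lra.
  apply (GS_u_nz _ _ _ _ _ Hl G Hg Ha x0). lra. lra.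
Qed.

Lemma GS_u_le lam gamma c y u : 0 < lam -> GS lam gamma c y u -> 0 < gamma -> 0 < y 0 ->
  forall t, 0 <= t < lam -> u t <= gamma * y 0.
Proof.
  intros Hl G Hg Ha t Ht. rewrite <- (gs_u0 _ _ _ _ _ G).
  apply (mono_down 0 t u (fun x => - (2 * x) * (u x / (1 + c * y x)))). lra.
  apply (gs_uc _ _ _ _ _ G); auto.
  intros x Hx. apply (gs_ud _ _ _ _ _ G). lra.
  intros x Hx. pose proof (GS_D _ _ _ _ _ x G ltac:(lra)).
  pose proof (GS_u_pos _ _ _ _ _ Hl G Hg Ha x ltac:(lra)).
  assert (0 <= u x / (1 + c * y x)). { apply Rmult_le_pos. lra. left. apply Rinv_0_lt_compat. lra. }
  nra.
Qed.

Definition Fb (c s : R) := s + c / 2 * s * s.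

Lemma Hd_deriv lam gamma c1 y1 u1 c2 y2 u2 x :
  GS lam gamma c1 y1 u1 -> GS lam gamma c2 y2 u2 -> 0 < x < lam ->
  is_derive (fun t => Fb c2 (y2 t) - Fb c1 (y1 t)) x (u2 x - u1 x).
Proof.
  intros G1 G2 Hx. unfold Fb.
  pose proof (GS_D _ _ _ _ _ x G1 ltac:(lra)). pose proof (GS_D _ _ _ _ _ x G2 ltac:(lra)).
  eapply Dext. apply Dminus; apply Dplus.
  apply (gs_yd _ _ _ _ _ G2); auto. apply Dmult. apply Dmult. apply Dconst. apply (gs_yd _ _ _ _ _ G2); auto. apply (gs_yd _ _ _ _ _ G2); auto.
  apply (gs_yd _ _ _ _ _ G1); auto. apply Dmult. apply Dmult. apply Dconst. apply (gs_yd _ _ _ _ _ G1); auto. apply (gs_yd _ _ _ _ _ G1); auto.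
  cbv beta. field. lra.
Qed.

Lemma Hd_cont lam gamma c1 y1 u1 c2 y2 u2 :
  GS lam gamma c1 y1 u1 -> GS lam gamma c2 y2 u2 -> ContOn 0 lam (fun t => Fb c2 (y2 t) - Fb c1 (y1 t)).
Proof.
  intros G1 G2. unfold Fb. pose proof (gs_yc _ _ _ _ _ G1). pose proof (gs_yc _ _ _ _ _ G2).
  apply ContOn_minus; apply ContOn_plus; auto; repeat apply ContOn_mult; auto; apply ContOn_const.
Qed.

Lemma ratio_deriv lam gamma c1 y1 u1 c2 y2 u2 x :
  0 < lam -> 0 < gamma -> GS lam gamma c1 y1 u1 -> GS lam gamma c2 y2 u2 -> 0 < y1 0 -> 0 < x < lam ->
  is_derive (fun t => u2 t / u1 t) x
    (u2 x / u1 x * (2 * x * ((1 + c2 * y2 x) - (1 + c1 * y1 x)) / ((1 + c1 * y1 x) * (1 + c2 * y2 x)))).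
Proof.
  intros Hl Hg G1 G2 Ha Hx.
  pose proof (GS_D _ _ _ _ _ x G1 ltac:(lra)). pose proof (GS_D _ _ _ _ _ x G2 ltac:(lra)).
  pose proof (GS_u_pos _ _ _ _ _ Hl G1 Hg Ha x ltac:(lra)).
  eapply Dext. apply Dmult. apply (gs_ud _ _ _ _ _ G2); auto. apply Dinv. apply (gs_ud _ _ _ _ _ G1); auto. lra.
  cbv beta. field. repeat split; lra.
Qed.

Lemma ratio_cont lam gamma c1 y1 u1 c2 y2 u2 t :
  0 < lam -> 0 < gamma -> GS lam gamma c1 y1 u1 -> GS lam gamma c2 y2 u2 -> 0 < y1 0 -> 0 <= t < lam ->
  ContOn 0 t (fun s => u2 s / u1 s).
Proof.
  intros Hl Hg G1 G2 Ha Ht. apply ContOn_mult. apply (gs_uc _ _ _ _ _ G2); auto.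
  apply ContOn_inv. apply (gs_uc _ _ _ _ _ G1); auto.
  intros x Hx. pose proof (GS_u_pos _ _ _ _ _ Hl G1 Hg Ha x ltac:(lra)). lra.
Qed.

Lemma ratio_up lam gamma c1 y1 u1 c2 y2 u2 s t :
  0 < lam -> 0 < gamma -> GS lam gamma c1 y1 u1 -> GS lam gamma c2 y2 u2 -> 0 < y1 0 -> 0 < y2 0 ->
  0 <= s <= t -> t < lam ->
  (forall x, s < x < t -> c1 * y1 x <= c2 * y2 x) -> u2 s / u1 s <= u2 t / u1 t.
Proof.
  intros Hl Hg G1 G2 Ha1 Ha2 Hs Ht Hc.
  eapply (mono_up s t (fun z => u2 z / u1 z) _ ltac:(lra)).
  apply (ContOn_sub 0 t); try lra. apply (ratio_cont lam gamma c1 y1 u1 c2 y2 u2); auto; lra.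
  intros x Hx. apply (ratio_deriv lam gamma c1 y1 u1 c2 y2 u2); auto; lra.
  intros x Hx.
  pose proof (GS_D _ _ _ _ _ x G1 ltac:(lra)). pose proof (GS_D _ _ _ _ _ x G2 ltac:(lra)).
  pose proof (GS_u_pos _ _ _ _ _ Hl G1 Hg Ha1 x ltac:(lra)).
  pose proof (GS_u_pos _ _ _ _ _ Hl G2 Hg Ha2 x ltac:(lra)).
  specialize (Hc x Hx).
  apply Rmult_le_pos. apply Rmult_le_pos. lra. left. apply Rinv_0_lt_compat. lra.
  apply Rmult_le_pos. nra. left. apply Rinv_0_lt_compat. nra.
Qed.

Lemma ratio_down lam gamma c1 y1 u1 c2 y2 u2 s t :
  0 < lam -> 0 < gamma -> GS lam gamma c1 y1 u1 -> GS lam gamma c2 y2 u2 -> 0 < y1 0 -> 0 < y2 0 ->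
  0 <= s <= t -> t < lam ->
  (forall x, s < x < t -> c2 * y2 x <= c1 * y1 x) -> u2 t / u1 t <= u2 s / u1 s.
Proof.
  intros Hl Hg G1 G2 Ha1 Ha2 Hs Ht Hc.
  eapply (mono_down s t (fun z => u2 z / u1 z) _ ltac:(lra)).
  apply (ContOn_sub 0 t); try lra. apply (ratio_cont lam gamma c1 y1 u1 c2 y2 u2); auto; lra.
  intros x Hx. apply (ratio_deriv lam gamma c1 y1 u1 c2 y2 u2); auto; lra.
  intros x Hx.
  pose proof (GS_D _ _ _ _ _ x G1 ltac:(lra)). pose proof (GS_D _ _ _ _ _ x G2 ltac:(lra)).
  pose proof (GS_u_pos _ _ _ _ _ Hl G1 Hg Ha1 x ltac:(lra)).
  pose proof (GS_u_pos _ _ _ _ _ Hl G2 Hg Ha2 x ltac:(lra)).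
  specialize (Hc x Hx).
  assert (0 <= u2 x / u1 x). { apply Rmult_le_pos. lra. left. apply Rinv_0_lt_compat. lra. }
  assert (2 * x * (1 + c2 * y2 x - (1 + c1 * y1 x)) / ((1 + c1 * y1 x) * (1 + c2 * y2 x)) <= 0).
  { unfold Rdiv. apply Rmult_le_0_r. nra. left. apply Rinv_0_lt_compat. nra. }
  nra.
Qed.

Lemma Fb_diff c a b : Fb c b - Fb c a = (b - a) * (1 + c / 2 * (a + b)).
Proof. unfold Fb. field. Qed.

Lemma same_cmp lam gamma c v uv w uw : 0 < lam -> 0 < gamma ->
  GS lam gamma c v uv -> GS lam gamma c w uw -> 0 < v lam -> v lam < w lam ->
  forall x, 0 <= x <= lam -> v x <= w x.
Proof.
  intros Hl Hg Gv Gw Hv0 Hvw.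
  assert (Hav : 0 < v 0) by (apply (GS_a_pos lam gamma c v uv); auto).
  assert (Haw : 0 < w 0) by (apply (GS_a_pos lam gamma c w uw); auto; lra).
  pose proof (gs_c _ _ _ _ _ Gv) as Hc.
  set (g := fun t => w t - v t).
  assert (Gc : ContOn 0 lam g) by (apply ContOn_minus; [apply (gs_yc _ _ _ _ _ Gw)|apply (gs_yc _ _ _ _ _ Gv)]).
  set (Ht := fun t => Fb c (w t) - Fb c (v t)).
  assert (Htg : forall t, 0 <= t <= lam -> (Ht t < 0 <-> g t < 0) /\ (Ht t = 0 <-> g t = 0)).
  { intros t Hti. unfold Ht, g. rewrite Fb_diff.
    pose proof (gs_rng _ _ _ _ _ Gv t Hti). pose proof (gs_rng _ _ _ _ _ Gw t Hti).
    assert (1 <= 1 + c / 2 * (v t + w t)). { assert (0 <= c/2) by lra. nra. }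
    split; split; intros; nra. }
  assert (Hder : forall x, 0 < x < lam -> is_derive Ht x (uw x - uv x)).
  { intros x Hx. apply (Hd_deriv lam gamma c v uv c w uw); auto. }
  assert (HtC : ContOn 0 lam Ht) by (apply (Hd_cont lam gamma c v uv c w uw); auto).
  assert (Hpv : forall t, 0 <= t < lam -> 0 < uv t) by (apply (GS_u_pos lam gamma c v uv); auto).
  assert (Hpw : forall t, 0 <= t < lam -> 0 < uw t) by (apply (GS_u_pos lam gamma c w uw); auto).
  assert (Fw : forall x1, 0 <= x1 <= lam -> g x1 < 0 -> uv x1 < uw x1).
  { intros x1 Hx1 Hgx1.
    assert (x1 < lam). { destruct (Req_dec x1 lam). subst x1. unfold g in Hgx1. lra. lra. }
    destruct (first_cross x1 lam g) as [x0 [H0a [H0b H0c]]]. lra.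
    apply (ContOn_sub 0 lam); auto; lra. auto. unfold g. lra.
    destruct (Rlt_le_dec (uv x1) (uw x1)) as [|Hle]; auto. exfalso.
    assert (Hs : forall s, x1 <= s < x0 -> uw s <= uv s).
    { intros s Hs.
      assert (uw s / uv s <= uw x1 / uv x1).
      { apply (ratio_down lam gamma c v uv c w uw x1 s); auto; try lra.
        intros x Hx. specialize (H0c x ltac:(lra)). unfold g in H0c. pose proof (gs_rng _ _ _ _ _ Gv x ltac:(lra)). nra. }
      assert (uw x1 / uv x1 <= 1). { pose proof (Hpv x1 ltac:(lra)). apply (Rmult_le_reg_r (uv x1)); auto.
        unfold Rdiv. rewrite Rmult_assoc, Rinv_l by lra. lra. }
      pose proof (Hpv s ltac:(lra)) as Hps.
      assert (Hr : uw s / uv s <= 1) by lra.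
      apply (Rmult_le_compat_r (uv s)) in Hr; [|lra]. unfold Rdiv in Hr. rewrite Rmult_assoc, Rinv_l in Hr by lra. lra. }
    assert (Ht x0 <= Ht x1).
    { apply (mono_down x1 x0 Ht (fun x => uw x - uv x)). lra. apply (ContOn_sub 0 lam); auto; lra.
      intros x Hx. apply Hder. lra. intros x Hx. specialize (Hs x ltac:(lra)). lra. }
    destruct (Htg x0 ltac:(lra)) as [_ [_ E0]]. destruct (Htg x1 ltac:(lra)) as [[_ E1] _].
    specialize (E0 H0b). specialize (E1 Hgx1). lra. }
  intros x Hx. destruct (Rle_lt_dec (v x) (w x)) as [|Hlt]; auto. exfalso.
  assert (G0 : 0 <= g 0).
  { destruct (Rle_lt_dec 0 (g 0)) as [|Hlt0]; auto.
    specialize (Fw 0 ltac:(lra) Hlt0). rewrite (gs_u0 _ _ _ _ _ Gv), (gs_u0 _ _ _ _ _ Gw) in Fw.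
    unfold g in Hlt0. exfalso. apply Rmult_lt_reg_l in Fw; auto. lra. }
  assert (Hgx : g x < 0) by (unfold g; lra).
  assert (Hx0 : 0 < x). { destruct (Req_dec x 0). subst x. lra. lra. }
  assert (Hxl : x < lam). { destruct (Req_dec x lam). subst x. unfold g in Hgx. lra. lra. }
  specialize (Fw x Hx Hgx).
  destruct (last_cross 0 x g) as [x0 [H0a [H0b H0c]]]. lra.
  apply (ContOn_sub 0 lam); auto; lra. auto. auto.
  assert (Hs : forall s, x0 <= s <= x -> uv s <= uw s).
  { intros s Hs.
    assert (uw x / uv x <= uw s / uv s).
    { apply (ratio_down lam gamma c v uv c w uw s x); auto; try lra.
      intros z Hz. specialize (H0c z ltac:(lra)). unfold g in H0c. pose proof (gs_rng _ _ _ _ _ Gv z ltac:(lra)). nra. }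
    assert (1 <= uw x / uv x). { pose proof (Hpv x ltac:(lra)). apply (Rmult_le_reg_r (uv x)); auto.
      unfold Rdiv. rewrite Rmult_assoc, Rinv_l by lra. lra. }
    pose proof (Hpv s ltac:(lra)) as Hps.
    assert (Hr : 1 <= uw s / uv s) by lra.
    apply (Rmult_le_compat_r (uv s)) in Hr; [|lra]. unfold Rdiv in Hr. rewrite Rmult_assoc, Rinv_l in Hr by lra. lra. }
  assert (Ht x0 <= Ht x).
  { apply (mono_up x0 x Ht (fun x => uw x - uv x)). lra. apply (ContOn_sub 0 lam); auto; lra.
    intros z Hz. apply Hder. lra. intros z Hz. specialize (Hs z ltac:(lra)). lra. }
  destruct (Htg x0 ltac:(lra)) as [_ [_ E0]]. destruct (Htg x ltac:(lra)) as [[_ E1] _].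
  specialize (E0 H0b). specialize (E1 Hgx). lra.
Qed.

Lemma GS_scale lam gamma c1 c2 y u k : GS lam gamma c1 y u -> 0 < k <= 1 -> c1 = c2 * k -> 0 <= c2 ->
  GS lam gamma c2 (fun t => k * y t) (fun t => k * u t).
Proof.
  intros G Hk Hc Hc2. constructor; auto.
  - intros x Hx. pose proof (gs_rng _ _ _ _ _ G x Hx). nra.
  - apply ContOn_mult. apply ContOn_const. apply (gs_yc _ _ _ _ _ G).
  - intros t Ht. apply ContOn_mult. apply ContOn_const. apply (gs_uc _ _ _ _ _ G); auto.
  - rewrite (gs_u0 _ _ _ _ _ G). ring.
  - intros x Hx. pose proof (GS_D _ _ _ _ _ x G ltac:(lra)).
    eapply Dext. apply Dmult. apply Dconst. apply (gs_yd _ _ _ _ _ G); auto.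
    subst c1. field. lra.
  - intros x Hx. pose proof (GS_D _ _ _ _ _ x G ltac:(lra)).
    eapply Dext. apply Dmult. apply Dconst. apply (gs_ud _ _ _ _ _ G); auto.
    subst c1. field. lra.
Qed.

Lemma Dcmp lam gamma c1 y1 u1 c2 y2 u2 : 0 < lam -> 0 < gamma -> c1 < c2 ->
  GS lam gamma c1 y1 u1 -> GS lam gamma c2 y2 u2 -> y1 lam = 1 -> y2 lam = 1 ->
  forall x, 0 <= x <= lam -> c1 * y1 x <= c2 * y2 x.
Proof.
  intros Hl Hg Hc G1 G2 E1 E2 x Hx.
  pose proof (gs_c _ _ _ _ _ G1). pose proof (gs_rng _ _ _ _ _ G2 x Hx).
  destruct (Req_dec c1 0) as [Z|NZ]. subst c1. nra.
  set (k := c1 / c2).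
  assert (Hk : 0 < k < 1). { unfold k. split. apply Rdiv_lt_0_compat; lra.
    apply (Rmult_lt_reg_r c2). lra. unfold Rdiv. rewrite Rmult_assoc, Rinv_l by lra. lra. }
  assert (Hck : c1 = c2 * k) by (unfold k; field; lra).
  pose proof (GS_scale lam gamma c1 c2 y1 u1 k G1 ltac:(lra) Hck ltac:(lra)) as Gs.
  pose proof (same_cmp lam gamma c2 _ _ y2 u2 Hl Hg Gs G2) as S.
  simpl in S. rewrite E1, E2 in S. specialize (S ltac:(lra) ltac:(lra) x Hx).
  rewrite Hck. nra.
Qed.

Lemma exp_mono x y : x <= y -> exp x <= exp y.
Proof. intros H. destruct (Req_dec x y). subst; lra. left. apply exp_increasing. lra. Qed.

Lemma exp_ge1 x : 1 + x <= exp x.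
Proof. destruct (Req_dec x 0). subst. rewrite exp_0. lra. left. apply exp_ineq1. auto. Qed.

Lemma exp_bound x : 0 <= x -> exp x - 1 <= x * exp x.
Proof.
  intros Hx. pose proof (exp_ge1 (- x)). rewrite exp_Ropp in H. pose proof (exp_pos x).
  assert ((1 - x) * exp x <= 1).
  { apply (Rmult_le_reg_r (/ exp x)). apply Rinv_0_lt_compat; auto.
    rewrite Rmult_assoc, Rinv_r, Rmult_1_r, Rmult_1_l by lra. lra. }
  nra.
Qed.

Definition C1 lam b := 2 * lam ^ 2 * (1 + b) * exp (2 * lam ^ 2 * (1 + b) * b).
Definition Lc lam gamma b := 1 + (1 + b + gamma * lam) * gamma * lam * C1 lam b.

Lemma C1_pos lam b : 0 <= b -> 0 <= C1 lam b.
Proof. intros. unfold C1. pose proof (exp_pos (2 * lam ^ 2 * (1 + b) * b)).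
  assert (0 <= lam ^ 2) by (rewrite <- Rsqr_pow2; apply Rle_0_sqr).
  apply Rmult_le_pos; [|lra]. apply Rmult_le_pos; lra. Qed.

Lemma diff_abs c1 c2 y1 y2 : 0 <= c1 <= c2 -> 0 <= y1 <= 1 -> 0 <= y2 <= 1 ->
  Rabs (y1 - y2) <= Rabs (Fb c2 y2 - Fb c1 y1) + (c2 - c1) / 2.
Proof.
  intros Hc H1 H2.
  assert (E : Fb c2 y2 - Fb c1 y1 = (y2 - y1) * (1 + c2 / 2 * (y1 + y2)) + (c2 - c1) / 2 * (y1 * y1)) by (unfold Fb; field).
  rewrite E. set (m := 1 + c2 / 2 * (y1 + y2)).
  assert (Hm : 1 <= m) by (unfold m; assert (0 <= c2 / 2) by lra; nra).
  assert (Hy : y1 * y1 <= 1) by nra.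
  assert (0 <= (c2 - c1) / 2) by lra.
  unfold Rabs. repeat destruct Rcase_abs; nra.
Qed.

Lemma ratio_ge1 (u1 u2 : R -> R) (x : R) : 0 < u1 x -> 1 <= u2 x / u1 x -> u1 x <= u2 x.
Proof. intros H1 H2. apply (Rmult_le_compat_r (u1 x)) in H2; [|lra].
  unfold Rdiv in H2. rewrite Rmult_assoc, Rinv_l in H2 by lra. lra. Qed.

Lemma ratio_le1 (u1 u2 : R -> R) (x r : R) : 0 < u1 x -> u2 x / u1 x <= r -> u2 x <= r * u1 x.
Proof. intros H1 H2. apply (Rmult_le_compat_r (u1 x)) in H2; [|lra].
  unfold Rdiv in H2. rewrite Rmult_assoc, Rinv_l in H2 by lra. lra. Qed.

Lemma ratio_ger (u1 u2 : R -> R) (x r : R) : 0 < u1 x -> r <= u2 x / u1 x -> r * u1 x <= u2 x.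
Proof. intros H1 H2. apply (Rmult_le_compat_r (u1 x)) in H2; [|lra].
  unfold Rdiv in H2. rewrite Rmult_assoc, Rinv_l in H2 by lra. lra. Qed.

Lemma main_est lam gamma b c1 y1 u1 c2 y2 u2 : 0 < lam -> 0 < gamma -> 0 <= c1 -> c1 < c2 -> c2 <= b ->
  GS lam gamma c1 y1 u1 -> GS lam gamma c2 y2 u2 -> y1 lam = 1 -> y2 lam = 1 ->
  forall x, 0 <= x <= lam -> Rabs (y1 x - y2 x) <= Lc lam gamma b * (c2 - c1).
Proof.
  intros Hl Hg Hc1 Hc12 Hc2b G1 G2 E1 E2.
  set (dl := c2 - c1).
  assert (Ha1 : 0 < y1 0) by (apply (GS_a_pos lam gamma c1 y1 u1); auto; lra).
  assert (Ha2 : 0 < y2 0) by (apply (GS_a_pos lam gamma c2 y2 u2); auto; lra).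
  set (a1 := y1 0) in *. set (a2 := y2 0) in *.
  assert (Ra1 : a1 <= 1) by (apply (gs_rng _ _ _ _ _ G1 0); lra).
  assert (Ra2 : a2 <= 1) by (apply (gs_rng _ _ _ _ _ G2 0); lra).
  set (H := fun t => Fb c2 (y2 t) - Fb c1 (y1 t)).
  assert (Hlam : H lam = dl / 2) by (unfold H, dl, Fb; rewrite E1, E2; field).
  assert (H0e : H 0 = Fb c2 a2 - Fb c1 a1) by reflexivity.
  assert (HC : ContOn 0 lam H) by (apply (Hd_cont lam gamma c1 y1 u1 c2 y2 u2); auto).
  assert (HD : forall x, 0 < x < lam -> is_derive H x (u2 x - u1 x)).
  { intros x Hx. apply (Hd_deriv lam gamma c1 y1 u1 c2 y2 u2); auto. }
  assert (Pu1 : forall t, 0 <= t < lam -> 0 < u1 t) by (apply (GS_u_pos lam gamma c1 y1 u1); auto).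
  assert (Pu2 : forall t, 0 <= t < lam -> 0 < u2 t) by (apply (GS_u_pos lam gamma c2 y2 u2); auto).
  assert (Lu1 : forall t, 0 <= t < lam -> u1 t <= gamma * a1) by (apply (GS_u_le lam gamma c1 y1 u1); auto).
  assert (Dc : forall x, 0 <= x <= lam -> c1 * y1 x <= c2 * y2 x)
    by (apply (Dcmp lam gamma c1 y1 u1 c2 y2 u2); auto).
  assert (Rup : forall s t, 0 <= s <= t -> t < lam -> u2 s / u1 s <= u2 t / u1 t).
  { intros s t Hs Ht. apply (ratio_up lam gamma c1 y1 u1 c2 y2 u2); auto. intros z Hz. apply Dc. lra. }
  assert (R0 : u2 0 / u1 0 = a2 / a1).
  { rewrite (gs_u0 _ _ _ _ _ G1), (gs_u0 _ _ _ _ _ G2). fold a1 a2. field. lra. }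
  assert (Hdl : 0 < dl) by (unfold dl; lra).
  assert (HLc : 1 <= Lc lam gamma b).
  { unfold Lc. pose proof (C1_pos lam b ltac:(lra)).
    assert (0 <= (1 + b + gamma * lam) * gamma * lam * C1 lam b).
    { apply Rmult_le_pos; [|auto]. apply Rmult_le_pos; [|lra]. apply Rmult_le_pos; [|lra]. nra. }
    lra. }
  assert (Hrng1 := gs_rng _ _ _ _ _ G1). assert (Hrng2 := gs_rng _ _ _ _ _ G2).
  assert (Fin : forall t, 0 <= t <= lam -> Rabs (y1 t - y2 t) <= Rabs (H t) + dl / 2).
  { intros t Ht. apply diff_abs; auto. lra. }
  intros x Hx.
  destruct (Rle_lt_dec a1 a2) as [CA|CB].
  -
    assert (Hup : forall z, 0 < z < lam -> u1 z <= u2 z).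
    { intros z Hz. apply (ratio_ge1 u1 u2 z). apply Pu1; lra.
      rewrite <- (Rup 0 z ltac:(lra) ltac:(lra)), R0. apply (Rmult_le_reg_r a1). auto.
      unfold Rdiv. rewrite Rmult_assoc, Rinv_l by lra. lra. }
    assert (HA1 : H 0 <= H x).
    { apply (mono_up 0 x H (fun z => u2 z - u1 z)). lra. apply (ContOn_sub 0 lam); auto; lra.
      intros z Hz. apply HD; lra. intros z Hz. specialize (Hup z ltac:(lra)). lra. }
    assert (HA2 : H x <= H lam).
    { apply (mono_up x lam H (fun z => u2 z - u1 z)). lra. apply (ContOn_sub 0 lam); auto; lra.
      intros z Hz. apply HD; lra. intros z Hz. specialize (Hup z ltac:(lra)). lra. }
    assert (0 <= H 0). { rewrite H0e. unfold Fb. assert (0 <= c1/2) by lra. assert (c1/2 <= c2/2) by lra.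
      assert (a1*a1 <= a2*a2) by nra. assert (c1/2*(a1*a1) <= c2/2*(a2*a2)) by (apply Rmult_le_compat; nra).
      replace (a2 + c2 / 2 * a2 * a2 - (a1 + c1 / 2 * a1 * a1)) with (a2 - a1 + (c2/2*(a2*a2) - c1/2*(a1*a1))) by ring. lra. }
    assert (Rabs (H x) <= dl / 2). { unfold Rabs. destruct Rcase_abs; lra. }
    specialize (Fin x Hx). nra.
  -
    assert (H0le : H 0 <= dl / 2 - (a1 - a2)).
    { rewrite H0e. unfold Fb, dl. assert (a2 * a2 <= a1 * a1) by nra. assert (a1 * a1 <= 1) by nra.
      assert (0 <= c2 / 2) by lra. nra. }
    assert (B1 : forall t, 0 <= t <= lam -> H t <= dl / 2).
    { intros t Ht. destruct (Req_dec t lam) as [->|Hne]. lra.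
      destruct (Rle_lt_dec 1 (u2 t / u1 t)) as [Hge|Hlt].
      - rewrite <- Hlam. apply (mono_up t lam H (fun z => u2 z - u1 z)). lra. apply (ContOn_sub 0 lam); auto; lra.
        intros z Hz. apply HD; lra. intros z Hz.
        pose proof (Rup t z ltac:(lra) ltac:(lra)). pose proof (ratio_ge1 u1 u2 z (Pu1 z ltac:(lra)) ltac:(lra)). lra.
      - apply Rle_trans with (H 0); [|lra].
        apply (mono_down 0 t H (fun z => u2 z - u1 z)). lra. apply (ContOn_sub 0 lam); auto; lra.
        intros z Hz. apply HD; lra. intros z Hz.
        pose proof (Rup z t ltac:(lra) ltac:(lra)). pose proof (ratio_le1 u1 u2 z 1 (Pu1 z ltac:(lra)) ltac:(lra)). lra. }
    assert (B2 : forall t, 0 <= t <= lam -> c2 * y2 t - c1 * y1 t <= (1 + b) * dl).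
    { intros t Ht. specialize (B1 t Ht). specialize (Hrng1 t Ht). specialize (Hrng2 t Ht).
      assert (E : H t = (y2 t - y1 t) * (1 + c2 / 2 * (y1 t + y2 t)) + dl / 2 * (y1 t * y1 t))
        by (unfold H, Fb, dl; field).
      assert (1 <= 1 + c2 / 2 * (y1 t + y2 t)) by (assert (0 <= c2/2) by lra; nra).
      assert (0 <= dl / 2 * (y1 t * y1 t)) by (apply Rmult_le_pos; nra).
      replace (c2 * y2 t - c1 * y1 t) with (c2 * (y2 t - y1 t) + dl * y1 t) by (unfold dl; ring).
      destruct (Rle_lt_dec (y2 t - y1 t) 0).
      + assert (c2 * (y2 t - y1 t) <= 0) by nra. nra.
      + assert (y2 t - y1 t <= dl / 2) by nra. nra. }
    set (K := 2 * lam * (1 + b) * dl).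
    assert (HK : 0 <= K) by (unfold K; repeat apply Rmult_le_pos; lra).
    assert (B3 : forall t, 0 <= t < lam -> u2 t / u1 t <= exp (K * lam)).
    { intros t Ht.
      assert (Hm : u2 t / u1 t * exp (- K * t) <= u2 0 / u1 0 * exp (- K * 0)).
      { eapply (mono_down 0 t (fun s => u2 s / u1 s * exp (- K * s))). lra.
        apply ContOn_mult. apply (ratio_cont lam gamma c1 y1 u1 c2 y2 u2); auto; lra.
        apply (ContOn_comp 0 t (fun s => - K * s) exp). apply ContOn_mult. apply ContOn_const. apply ContOn_id. lra.
        intros z. apply continuity_pt_filterlim. apply derivable_continuous_pt. apply derivable_pt_exp.
        intros z Hz. apply Dmult. apply (ratio_deriv lam gamma c1 y1 u1 c2 y2 u2); auto; lra.
        apply Dexp. apply Dmult. apply Dconst. apply Did.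
        intros z Hz. cbv beta.
        pose proof (GS_D _ _ _ _ _ z G1 ltac:(lra)). pose proof (GS_D _ _ _ _ _ z G2 ltac:(lra)).
        pose proof (Pu1 z ltac:(lra)). pose proof (Pu2 z ltac:(lra)). pose proof (B2 z ltac:(lra)).
        pose proof (exp_pos (- K * z)).
        set (D1 := 1 + c1 * y1 z) in *. set (D2 := 1 + c2 * y2 z) in *.
        assert (Hq : 2 * z * (D2 - D1) / (D1 * D2) <= K).
        { destruct (Rle_lt_dec (D2 - D1) 0).
          - unfold Rdiv. assert (2 * z * (D2 - D1) <= 0) by nra.
            assert (0 < / (D1 * D2)) by (apply Rinv_0_lt_compat; nra). nra.
          - apply Rle_trans with (2 * z * (D2 - D1)).
            + unfold Rdiv. rewrite <- (Rmult_1_r (2 * z * (D2 - D1))) at 2. apply Rmult_le_compat_l. nra.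
              rewrite <- Rinv_1. apply Rinv_le_contravar; nra.
            + unfold K. unfold D1, D2 in *. nra. }
        assert (0 < u2 z / u1 z) by (apply Rdiv_lt_0_compat; lra).
        replace (u2 z / u1 z * (2 * z * (D2 - D1) / (D1 * D2)) * exp (- K * z) + u2 z / u1 z * ((0 * z + - K * 1) * exp (- K * z)))
          with (u2 z / u1 z * exp (- K * z) * (2 * z * (D2 - D1) / (D1 * D2) - K)) by ring.
        assert (0 < u2 z / u1 z * exp (- K * z)) by (apply Rmult_lt_0_compat; lra). nra. }
      rewrite R0 in Hm. replace (- K * 0) with 0 in Hm by ring. rewrite exp_0 in Hm.
      assert (a2 / a1 < 1). { apply (Rmult_lt_reg_r a1). auto. unfold Rdiv. rewrite Rmult_assoc, Rinv_l by lra. lra. }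
      assert (u2 t / u1 t * exp (- K * t) <= 1) by lra.
      assert (u2 t / u1 t <= exp (K * t)).
      { replace (u2 t / u1 t) with (u2 t / u1 t * exp (- K * t) * exp (K * t)).
        pose proof (exp_pos (K * t)). nra.
        rewrite Rmult_assoc, <- exp_plus. replace (- K * t + K * t) with 0 by ring. rewrite exp_0. ring. }
      pose proof (exp_mono (K * t) (K * lam) ltac:(nra)). lra. }
    set (eps := exp (K * lam) - 1).
    assert (Heps : 0 <= eps). { unfold eps. pose proof (exp_ge1 (K * lam)). nra. }
    assert (B4 : a1 - a2 <= gamma * eps * lam).
    { assert (H lam - gamma * eps * lam <= H 0 - gamma * eps * 0).
      { apply (mono_down 0 lam (fun t => H t - gamma * eps * t) (fun z => (u2 z - u1 z) - gamma * eps * 1)). lra.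
        apply ContOn_minus; auto. apply ContOn_mult. apply ContOn_const. apply ContOn_id. lra.
        intros z Hz. apply Dminus. apply HD; auto. apply Dmult_const_l. 
        intros z Hz. pose proof (B3 z ltac:(lra)) as Hb3. pose proof (ratio_le1 u1 u2 z _ (Pu1 z ltac:(lra)) Hb3) as Hq.
        pose proof (Lu1 z ltac:(lra)). pose proof (Pu1 z ltac:(lra)).
        replace (exp (K * lam)) with (eps + 1) in Hq by (unfold eps; ring).
        assert (u1 z <= gamma) by nra.
        assert (eps * u1 z <= eps * gamma) by (apply Rmult_le_compat_l; lra). lra. }
      lra. }
    assert (B5 : forall t, 0 <= t <= lam -> H 0 - gamma * (a1 - a2) * lam <= H t).
    { intros t Ht.
      assert (H 0 + gamma * (a1 - a2) * 0 <= H t + gamma * (a1 - a2) * t).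
      { apply (mono_up 0 t (fun s => H s + gamma * (a1 - a2) * s) (fun z => (u2 z - u1 z) + gamma * (a1 - a2) * 1)). lra.
        apply (ContOn_sub 0 lam); try lra. apply ContOn_plus; auto. apply ContOn_mult. apply ContOn_const. apply ContOn_id. lra.
        intros z Hz. apply Dplus. apply HD; lra. apply Dmult_const_l.
        intros z Hz. pose proof (Rup 0 z ltac:(lra) ltac:(lra)) as Hr0. rewrite R0 in Hr0.
        pose proof (ratio_ger u1 u2 z _ (Pu1 z ltac:(lra)) Hr0).
        pose proof (Lu1 z ltac:(lra)). pose proof (Pu1 z ltac:(lra)).
        assert (a2 / a1 * u1 z * a1 = a2 * u1 z) by (field; lra).
        assert (0 <= a1 * ((u2 z - u1 z) + gamma * (a1 - a2) * 1)) by nra.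
        apply (Rmult_le_reg_l a1); auto. lra. }
      assert (0 <= gamma * (a1 - a2) * (lam - t)) by (apply Rmult_le_pos; [apply Rmult_le_pos|]; lra).
      lra. }
    assert (H0ge : - (1 + b) * (a1 - a2) <= H 0).
    { rewrite H0e. unfold Fb. assert (0 <= c1 / 2) by lra. assert (c1 / 2 <= c2 / 2) by lra.
      assert (c1 / 2 * (a1 + a2) <= b) by nra. nra. }
    assert (B6 : eps <= C1 lam b * dl).
    { unfold eps, C1. pose proof (exp_bound (K * lam) ltac:(nra)) as Heb.
      assert (Hlam2 : 0 <= lam ^ 2) by nra.
      assert (HKl : K * lam = 2 * lam ^ 2 * (1 + b) * dl) by (unfold K; ring).
      assert (Hee : exp (K * lam) <= exp (2 * lam ^ 2 * (1 + b) * b)).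
      { apply exp_mono. rewrite HKl. apply Rmult_le_compat_l. repeat apply Rmult_le_pos; lra. unfold dl. lra. }
      rewrite HKl in Heb, Hee |- *.
      assert (HX : 0 <= 2 * lam ^ 2 * (1 + b) * dl) by (repeat apply Rmult_le_pos; lra).
      assert (HXe : 2 * lam ^ 2 * (1 + b) * dl * exp (2 * lam ^ 2 * (1 + b) * dl) <=
                    2 * lam ^ 2 * (1 + b) * dl * exp (2 * lam ^ 2 * (1 + b) * b)) by (apply Rmult_le_compat_l; lra).
      replace (2 * lam ^ 2 * (1 + b) * exp (2 * lam ^ 2 * (1 + b) * b) * dl) with
              (2 * lam ^ 2 * (1 + b) * dl * exp (2 * lam ^ 2 * (1 + b) * b)) by ring.
      lra. }
    specialize (Fin x Hx). specialize (B1 x Hx). specialize (B5 x Hx).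
    assert (HB : - ((1 + b + gamma * lam) * gamma * lam * C1 lam b * dl) <= H x).
    { assert (0 <= a1 - a2) by lra.
      assert (a1 - a2 <= gamma * lam * C1 lam b * dl).
      { apply Rle_trans with (gamma * eps * lam). auto.
        replace (gamma * eps * lam) with (gamma * lam * eps) by ring.
        apply Rle_trans with (gamma * lam * (C1 lam b * dl)). apply Rmult_le_compat_l. nra. auto. right; ring. }
      assert (0 <= 1 + b + gamma * lam) by nra.
      nra. }
    assert (0 <= (1 + b + gamma * lam) * gamma * lam * C1 lam b * dl).
    { pose proof (C1_pos lam b ltac:(lra)). apply Rmult_le_pos; [|lra]. apply Rmult_le_pos; [|auto]. apply Rmult_le_pos; [|lra]. apply Rmult_le_pos; [|lra]. nra. }
    assert (Rabs (H x) <= dl / 2 + (1 + b + gamma * lam) * gamma * lam * C1 lam b * dl) by (apply Rabs_le; lra).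
    unfold Lc. replace ((1 + (1 + b + gamma * lam) * gamma * lam * C1 lam b) * dl)
      with (dl + (1 + b + gamma * lam) * gamma * lam * C1 lam b * dl) by ring. lra.
Qed.

Lemma prefix_bound (a : nat -> R) (N : nat) : exists M, forall n, (n <= N)%nat -> Rabs (a n) <= M.
Proof.
  induction N as [|N [M HM]].
  - exists (Rabs (a 0%nat)). intros n Hn. replace n with 0%nat by lia. lra.
  - exists (Rmax M (Rabs (a (S N)))). intros n Hn.
    destruct (Nat.eq_dec n (S N)) as [->|Hne]. apply Rmax_r.
    eapply Rle_trans. apply HM. lia. apply Rmax_l.
Qed.

Lemma bounded_of_lim (a : nat -> R) : is_lim_seq a 0 -> exists M, forall n, Rabs (a n) <= M.
Proof.
  intros H. apply is_lim_seq_spec in H. destruct (H (mkposreal 1 Rlt_0_1)) as [N HN].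
  destruct (prefix_bound a N) as [M HM]. exists (Rmax M 1). intros n.
  destruct (Compare_dec.le_lt_dec n N). eapply Rle_trans. apply HM; auto. apply Rmax_l.
  specialize (HN n ltac:(lia)). simpl in HN. rewrite Rminus_0_r in HN. eapply Rle_trans. left. apply HN. apply Rmax_r.
Qed.

Lemma radius_ge (A : nat -> R) z l : is_series (fun n => A n * z ^ n) l -> Rbar_le (Rabs z) (CV_radius A).
Proof.
  intros Hs. destruct (CV_radius_bounded A) as [Hub _]. apply Hub.
  assert (Hl : is_lim_seq (fun n => A n * z ^ n) 0) by (apply ex_series_lim_0; eexists; eauto).
  destruct (bounded_of_lim _ Hl) as [M HM]. exists M. intros n.
  rewrite RPow_abs, Rabs_mult, Rabs_Rabsolu, <- Rabs_mult. apply HM.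
Qed.

Lemma analytic_local lam y x0 : 0 < lam -> analytic_on_0l lam y -> 0 <= x0 <= lam ->
  exists h A, 0 < h /\ h <= lam / 2 /\ Rbar_le h (CV_radius A) /\
    forall s, 0 <= s <= lam -> Rabs (s - x0) < h -> y s = PSeries A (s - x0).
Proof.
  intros Hl Han Hx0. destruct (Han x0 Hx0) as [r [Hr [A HA]]].
  set (h := Rmin r lam / 2).
  assert (Hh : 0 < h /\ h < r /\ h <= lam / 2).
  { unfold h. pose proof (Rmin_l r lam). pose proof (Rmin_r r lam).
    assert (0 < Rmin r lam) by (apply Rmin_pos; lra). lra. }
  exists h, A. split. lra. split. lra. split.
  - set (z := if Rle_dec (x0 + h) lam then x0 + h else x0 - h).
    assert (Hz : 0 <= z <= lam /\ Rabs (z - x0) = h).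
    { unfold z. destruct Rle_dec.
      split. lra. replace (x0 + h - x0) with h by ring. apply Rabs_pos_eq. lra.
      split. lra. replace (x0 - h - x0) with (- h) by ring. rewrite Rabs_Ropp. apply Rabs_pos_eq. lra. }
    destruct Hz as [Hz1 Hz2]. rewrite <- Hz2. eapply radius_ge. apply HA. auto. lra.
  - intros s Hs Hsx. symmetry. apply is_series_unique. apply HA; auto. lra.
Qed.

Lemma y_ContOn lam y : 0 < lam -> analytic_on_0l lam y -> ContOn 0 lam y.
Proof.
  intros Hl Han. apply ContOn_loc. lra. intros x Hx.
  destruct (analytic_local lam y x Hl Han Hx) as [h [A [Hh [_ [Hrad Heq]]]]].
  exists (fun s => PSeries A (s - x)), h. split. auto. split.
  - apply (continuous_comp (fun s => s - x) (PSeries A)).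
    apply (continuous_minus (fun s => s) (fun _ => x)). apply continuous_id. apply continuous_const.
    replace (x - x) with 0 by ring. apply continuity_pt_filterlim. apply PSeries_continuity.
    rewrite Rabs_R0. eapply Rbar_lt_le_trans; [|apply Hrad]. simpl. auto.
  - intros s Hs Hsx. apply Heq; auto.
Qed.

Lemma deriv_right_unique (P : R -> R) (l d0 : R) (y : R -> R) (h : R) :
  0 < h -> is_derive P 0 l -> (forall t, 0 <= t < h -> y t = P t) ->
  right_deriv_at y 0 d0 -> d0 = l.
Proof.
  intros Hh HP Heq Hr. unfold right_deriv_at in Hr.
  assert (Hr' : filterlim (fun t => (P t - P 0) / (t - 0)) (at_right 0) (locally d0)).
  { apply (filterlim_ext_loc (fun t => (y t - y 0) / (t - 0))); auto.
    exists (mkposreal h Hh). intros t Ht Hpos. change (Rabs (t - 0) < h) in Ht.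
    rewrite Rminus_0_r in Ht. apply Rabs_def2 in Ht. rewrite !Heq; auto; lra. }
  assert (Hl : filterlim (fun t => (P t - P 0) / (t - 0)) (at_right 0) (locally l)).
  { apply is_derive_Reals in HP. apply filterlim_locally. intros eps.
    destruct (HP eps (cond_pos eps)) as [del Hdel].
    exists del. intros t Ht Hpos. change (Rabs (t - 0) < del) in Ht. rewrite Rminus_0_r in Ht.
    change (Rabs ((P t - P 0) / (t - 0) - l) < eps).
    specialize (Hdel t ltac:(lra) Ht). rewrite Rplus_0_l in Hdel. rewrite Rminus_0_r. auto. }
  apply (filterlim_locally_unique _ _ _ Hr' Hl).
Qed.

Lemma GS_of lam gamma c y : 0 < lam -> 0 <= c -> inK lam y -> solves_bvp lam gamma c y ->
  exists u, GS lam gamma c y u.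
Proof.
  intros Hl Hc [Han [_ Hrng]] [[dy [Hd Hode]] [[d0 [Hr Hbc]] Hend]].
  set (u := fun t => if Rle_dec t 0 then gamma * y 0 else (1 + c * y t) * dy t).
  assert (HD : forall x, 0 <= x <= lam -> 1 <= 1 + c * y x). { intros x Hx. specialize (Hrng x Hx). nra. }
  assert (Hud : forall x, 0 < x < lam -> is_derive u x (- (2 * x) * (u x / (1 + c * y x)))).
  { intros x Hx. destruct (Hode x Hx) as [Hex Heq].
    apply (is_derive_ext_loc (fun t => (1 + c * y t) * dy t)).
    - exists (mkposreal x (proj1 Hx)). intros t Ht. change (Rabs (t - x) < x) in Ht. apply Rabs_def2 in Ht.
      unfold u. destruct Rle_dec; [lra|auto].
    - apply Derive_correct in Hex. eapply Dext. apply Hex.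
      unfold u. destruct Rle_dec; [lra|]. specialize (HD x ltac:(lra)).
      replace (- (2 * x) * ((1 + c * y x) * dy x / (1 + c * y x))) with (- (2 * x) * dy x) by (field; lra).
      transitivity (Derive (fun t : R => (1 + c * y t) * dy t) x). reflexivity. lra. }
  exists u. constructor; auto.
  - apply y_ContOn; auto.
  - intros t Ht. apply ContOn_loc. lra. intros x Hx.
    destruct (Req_dec x 0) as [->|Hx0].
    + destruct (analytic_local lam y 0 Hl Han ltac:(lra)) as [h [A [Hh [Hh2 [Hrad Heq]]]]].
      assert (Hin : forall s, Rabs s < h -> Rbar_lt (Rabs s) (CV_radius A)).
      { intros s Hs. eapply Rbar_lt_le_trans; [|apply Hrad]. simpl. auto. }
      assert (Hin' : forall s, Rabs s < h -> Rbar_lt (Rabs s) (CV_radius (PS_derive A))).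
      { intros s Hs. rewrite CV_radius_derive. auto. }
      assert (Eq : forall s, 0 <= s < h -> y s = PSeries A s).
      { intros s Hs. rewrite (Heq s). rewrite Rminus_0_r. auto. lra. rewrite Rminus_0_r, Rabs_pos_eq; lra. }
      assert (Hd0 : d0 = PSeries (PS_derive A) 0).
      { apply (deriv_right_unique (PSeries A) _ d0 y h Hh); auto.
        apply is_derive_PSeries. apply Hin. rewrite Rabs_R0. auto. }
      exists (fun s => (1 + c * PSeries A s) * PSeries (PS_derive A) s), h.
      split. auto. split.
      * apply (continuous_mult (fun s => 1 + c * PSeries A s) (PSeries (PS_derive A))).
        apply (continuous_plus (fun _ => 1) (fun s => c * PSeries A s)). apply continuous_const.
        apply (continuous_mult (fun _ => c) (PSeries A)). apply continuous_const.
        apply continuity_pt_filterlim. apply PSeries_continuity. apply Hin. rewrite Rabs_R0; auto.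
        apply continuity_pt_filterlim. apply PSeries_continuity. apply Hin'. rewrite Rabs_R0; auto.
      * intros s Hs Hsx. rewrite Rminus_0_r, Rabs_pos_eq in Hsx by lra.
        unfold u. destruct Rle_dec.
        -- replace s with 0 by lra. rewrite <- Eq by lra. rewrite <- Hd0. lra.
        -- assert (Hdy : dy s = PSeries (PS_derive A) s).
           { assert (is_derive (PSeries A) s (dy s)).
             { apply (is_derive_ext_loc y). 
               assert (He : 0 < Rmin s (h - s)) by (apply Rmin_pos; lra).
               exists (mkposreal _ He). intros z Hz. change (Rabs (z - s) < Rmin s (h - s)) in Hz.
               pose proof (Rmin_l s (h - s)). pose proof (Rmin_r s (h - s)). apply Rabs_def2 in Hz.
               apply Eq. lra. apply Hd. lra. }
             apply is_derive_unique in H. rewrite Derive_PSeries in H. auto.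
             apply Hin. rewrite Rabs_pos_eq; lra. }
           rewrite Hdy, Eq by lra. auto.
    + exists u, 1. split. lra. split.
      * apply (@ex_derive_continuous R_AbsRing R_NormedModule u x). eexists. apply Hud. lra.
      * auto.
  - unfold u. destruct Rle_dec; [auto|lra].
  - intros x Hx. unfold u. destruct Rle_dec; [lra|]. specialize (HD x ltac:(lra)).
    eapply Dext. apply Hd. auto. field. lra.
Qed.

Theorem theorem3p9 (lam gamma beta1 : R) (phi : R -> R -> R)
  (Hlam : 0 < lam) (Hgamma : 0 < gamma)
  (Hbeta1pos : 0 < beta1)
  (Hbeta1eq : sqrt PI / 2 * gamma * beta1 * sqrt (1 + beta1) * (3 + beta1) = 1)
  (Hphi : forall b', 0 <= b' < beta1 ->
            inK lam (phi b') /\ solves_bvp lam gamma b' (phi b') /\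
            (forall h, inK lam h -> solves_bvp lam gamma b' h ->
               forall x, 0 <= x <= lam -> h x = phi b' x))
  (b : R) (Hb : 0 < b < beta1) :
  exists L, 0 < L /\
    forall b1 b2, 0 <= b1 <= b -> 0 <= b2 <= b ->
      forall eta, 0 <= eta <= lam ->
        Rabs (phi b1 eta - phi b2 eta) <= L * Rabs (b1 - b2).
Proof.
  exists (Lc lam gamma b). split.
  { unfold Lc. pose proof (C1_pos lam b ltac:(lra)).
    assert (0 <= (1 + b + gamma * lam) * gamma * lam * C1 lam b).
    { apply Rmult_le_pos; [|auto]. apply Rmult_le_pos; [|lra]. apply Rmult_le_pos; [|lra]. nra. }
    lra. }
  assert (Gof : forall b', 0 <= b' <= b -> exists u, GS lam gamma b' (phi b') u /\ phi b' lam = 1).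
  { intros b' Hb'. destruct (Hphi b' ltac:(lra)) as [HK [HS _]].
    destruct (GS_of lam gamma b' (phi b') Hlam ltac:(lra) HK HS) as [u G].
    exists u. split; auto. destruct HS as [_ [_ E]]. auto. }
  assert (Main : forall b1 b2, 0 <= b1 < b2 -> b2 <= b -> forall eta, 0 <= eta <= lam ->
            Rabs (phi b1 eta - phi b2 eta) <= Lc lam gamma b * Rabs (b1 - b2)).
  { intros b1 b2 H12 H2 eta Heta.
    destruct (Gof b1 ltac:(lra)) as [u1 [G1 E1]]. destruct (Gof b2 ltac:(lra)) as [u2 [G2 E2]].
    rewrite (Rabs_minus_sym b1 b2), (Rabs_pos_eq (b2 - b1)) by lra.
    apply (main_est lam gamma b b1 (phi b1) u1 b2 (phi b2) u2); auto; lra. }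
  intros b1 b2 H1 H2 eta Heta.
  destruct (Rtotal_order b1 b2) as [Hlt|[Heq|Hgt]].
  - apply Main; lra.
  - subst. rewrite !Rminus_eq_0, Rabs_R0. lra.
  - rewrite Rabs_minus_sym, (Rabs_minus_sym b1). apply Main; lra.
Qed.
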